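(* For every fixed positive integer $p$, $$\lim_{d\to\infty}\frac{|B(d,p)\cap\mathbb{P}^d_\circ|}{d^p}=\frac{2^{p-1}}{p!}\quad\text{and}\quad\lim_{d\to\infty}\frac{\kappa(B(d,p)\cap\mathbb{P}^d_\circ)}{d^{p-1}}=\frac{2^{p-1}}{(p-1)!}.$$
   Context: A point of $\mathbb{Z}^d$ is primitive if its coordinates are relatively prime; $\mathbb{P}^d_\circ$ denotes the set of primitive points of $\mathbb{Z}^d$ whose first non-zero coordinate is positive. $B(d,p)=\{x\in\mathbb{R}^d:\|x\|_1\le p\}$. For a finite $\mathcal{X}\subset\mathbb{R}^d$, $\kappa(\mathcal{X})=\max_{1\le i\le d}\sum_{x\in\mathcal{X}}|x_i|$. *)

(* Defs.v *)
From HB Require Import structures.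
From mathcomp Require Import all_boot all_order all_algebra.
From mathcomp Require Import all_classical all_reals all_analysis.
Set Implicit Arguments. Unset Strict Implicit. Unset Printing Implicit Defensive.
Import Order.TTheory GRing.Theory Num.Theory.

Definition zpoint (d : nat) := 'I_d -> int.

Definition l1norm (d : nat) (x : zpoint d) : nat := (\sum_(i < d) `|x i|)%N.

Definition primitive (d : nat) (x : zpoint d) : bool :=
  (\big[gcdn/0%N]_(i < d) `|x i|) == 1%N.

Definition first_nonzero_pos (d : nat) (x : zpoint d) : bool :=
  [exists i : 'I_d, ((0 < x i)%R && [forall j : 'I_d, (j < i)%N ==> (x j == 0)])].

(* Encoding of points with all coordinates in [-p, p]: coordinate k in 'I_(2p+1)
   stands for the integer k - p.  Every point of B(d,p) has all coordinates in
   [-p,p], and the decoding is injective, so finite sets of such codes represent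
   exactly the subsets of B(d,p) /\ Z^d. *)
Definition decode (d p : nat) (f : {ffun 'I_d -> 'I_(2 * p + 1)}) : zpoint d :=
  fun i => ((f i : nat)%:Z - p%:Z)%R.

Definition BP (d p : nat) : {set {ffun 'I_d -> 'I_(2 * p + 1)}} :=
  [set f | [&& (l1norm (decode f) <= p)%N, primitive (decode f)
             & first_nonzero_pos (decode f)]].

Definition card_BP (d p : nat) : nat := #|BP d p|.

Definition kappa_BP (d p : nat) : nat :=
  (\max_(i < d) \sum_(f in BP d p) `|decode f i|)%N.

(* Main.v *)
Require Import Defs.
From HB Require Import structures.
From mathcomp Require Import all_boot all_order all_algebra.
From mathcomp Require Import all_classical all_reals all_analysis.
From mathcomp Require Import zify ring lra.
From mathcomp Require Import perm.
Import Order.TTheory GRing.Theory Num.Theory.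
Set Implicit Arguments. Unset Strict Implicit. Unset Printing Implicit Defensive.

Import numFieldNormedType.Exports.
Lemma zc_proof (p : nat) : (p < 2 * p + 1)%N. Proof. lia. Qed.
Definition zc (p : nat) : 'I_(2 * p + 1) := Ordinal (zc_proof p).
Definition negc (d p : nat) (f : {ffun 'I_d -> 'I_(2 * p + 1)}) : {ffun 'I_d -> 'I_(2 * p + 1)} :=
  [ffun i => rev_ord (f i)].
Definition w (d p : nat) (f : {ffun 'I_d -> 'I_(2 * p + 1)}) (i : 'I_d) : nat := absz (Defs.decode f i).

Lemma decode_neg d p f i : Defs.decode (@negc d p f) i = (- Defs.decode f i)%R.
Proof.
rewrite /Defs.decode /negc ffunE /=.
have := ltn_ord (f i). set k := (f i : nat). move=> hk.
lia.
Qed.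

Lemma negcK d p : involutive (@negc d p).
Proof.
move=> f; apply/ffunP => i; rewrite /negc !ffunE; exact: rev_ordK.
Qed.

Lemma w_neg d p f i : w (@negc d p f) i = w f i.
Proof. by rewrite /w decode_neg abszN. Qed.

Lemma decode0 d p (f : {ffun 'I_d -> 'I_(2 * p + 1)}) i : (Defs.decode f i == 0%R) = (f i == zc p :> 'I_(2 * p + 1)).
Proof.
rewrite /Defs.decode /zc; apply/eqP/eqP => [h|h].
  apply: val_inj => /=. lia.
have : (f i : nat) = p by rewrite h.
lia.
Qed.
Lemma fp_not_both d (x y : zpoint d) : (forall i, y i = - x i)%R ->
  first_nonzero_pos x -> ~~ first_nonzero_pos y.
Proof.
move=> hy /existsP[i /andP[xi /forallP hx]]; apply/negP => /existsP[j /andP[yj /forallP hyj]].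
rewrite hy oppr_gt0 in yj.
case: (ltngtP i j) => hij.
- have := implyP (hyj i) hij; rewrite hy oppr_eq0 => /eqP e; by rewrite e ltxx in xi.
- have := implyP (hx j) hij => /eqP e; by rewrite e ltxx in yj.
- have e : i = j by apply: val_inj.
  subst j; have := lt_trans yj xi; by rewrite ltxx.
Qed.

Lemma fp_or d (x y : zpoint d) : (forall i, y i = - x i)%R ->
  (exists i, x i != 0%R) -> first_nonzero_pos x || first_nonzero_pos y.
Proof.
move=> hy [i0 hi0].
pose P := fun i : 'I_d => x i != 0%R.
case: (@arg_minnP _ i0 P (fun i : 'I_d => val i) hi0) => i xi imin.
have hlow : forall j : 'I_d, (j < i)%N -> x j == 0%R.
  move=> j hj; apply/negPn/negP => xj; have := imin j xj; by rewrite leqNgt hj.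
case: (ltgtP (x i) 0%R) => hxi.
- apply/orP; right; apply/existsP; exists i; rewrite hy oppr_gt0 hxi /=.
  apply/forallP => j; apply/implyP => hj; rewrite hy oppr_eq0; exact: hlow.
- apply/orP; left; apply/existsP; exists i; rewrite hxi /=.
  apply/forallP => j; apply/implyP => hj; exact: hlow.
- by move: xi; rewrite /P hxi eqxx.
Qed.

Lemma half_sum d p (S : {set {ffun 'I_d -> 'I_(2 * p + 1)}}) (g : {ffun 'I_d -> 'I_(2 * p + 1)} -> nat) :
 (forall f, f \in S -> negc f \in S) ->
 (forall f, f \in S -> exists i, Defs.decode f i != 0%R) ->
 (forall f, g (negc f) = g f) ->
 (2 * \sum_(f in S | first_nonzero_pos (Defs.decode f)) g f = \sum_(f in S) g f)%N.
Proof.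
move=> hS hnz hg.
rewrite (bigID (fun f => first_nonzero_pos (Defs.decode f)) (fun f => f \in S)) /=.
rewrite mul2n -addnn; congr (_ + _)%N.
rewrite (reindex_inj (can_inj (@negcK d p))) /=.
apply: eq_big => f; last by move=> _; rewrite hg.
have hSf : (negc f \in S) = (f \in S).
  apply/idP/idP => h; last exact: hS.
  by rewrite -(negcK f); apply: hS.
rewrite hSf; case fS: (f \in S) => //=.
have hy : forall i, Defs.decode (negc f) i = (- Defs.decode f i)%R by move=> i; rewrite decode_neg.
have hy' : forall i, Defs.decode f i = (- Defs.decode (negc f) i)%R by move=> i; rewrite decode_neg opprK.
case F1: (first_nonzero_pos (Defs.decode f)).
  by rewrite (negbTE (fp_not_both hy F1)).
have := fp_or hy (hnz f fS); rewrite F1 /= => ->; done.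
Qed.

Definition Q d p : {set {ffun 'I_d -> 'I_(2 * p + 1)}} :=
  [set f | (l1norm (Defs.decode f) <= p)%N && primitive (Defs.decode f)].
Definition supp d p (f : {ffun 'I_d -> 'I_(2 * p + 1)}) : {set 'I_d} :=
  [set i | Defs.decode f i != 0%R].
Definition E d p : {set {ffun 'I_d -> 'I_(2 * p + 1)}} :=
  [set f | (#|supp f| == p) && [forall i, (w f i <= 1)%N]].

Lemma BP_Q d p f : (f \in BP d p) = (f \in Q d p) && first_nonzero_pos (Defs.decode f).
Proof. by rewrite /BP /Q !inE andbA. Qed.

Lemma l1_w d p (f : {ffun 'I_d -> 'I_(2 * p + 1)}) : l1norm (Defs.decode f) = (\sum_i w f i)%N.
Proof. by []. Qed.

Lemma Q_neg d p f : f \in Q d p -> negc f \in Q d p.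
Proof.
rewrite /Q !inE /primitive !l1_w => /andP[h1 h2].
apply/andP; split.
  by under eq_bigr do rewrite w_neg.
under eq_bigr do rewrite decode_neg abszN. done.
Qed.

Lemma prim_nz d (x : zpoint d) : primitive x -> exists i, x i != 0%R.
Proof.
move=> h; case: (pickP (fun i => x i != 0%R)) => [i hi | hn]; first by exists i.
move: h; rewrite /primitive big1 // => i _; have := hn i; move/negbFE/eqP => ->. done.
Qed.

Lemma Q_nz d p f : f \in Q d p -> exists i, Defs.decode f i != 0%R.
Proof. rewrite inE => /andP[_ h]; exact: prim_nz. Qed.

Lemma sum_supp d p (f : {ffun 'I_d -> 'I_(2 * p + 1)}) (g : 'I_d -> nat) :
  (forall i, Defs.decode f i = 0%R -> g i = 0%N) ->
  (\sum_i g i = \sum_(i in supp f) g i)%N.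
Proof.
move=> hg; rewrite (bigID (mem (supp f))) /= [X in (_ + X)%N]big1 ?addn0 //.
move=> i; rewrite inE negbK => /eqP; exact: hg.
Qed.

Lemma w_supp d p (f : {ffun 'I_d -> 'I_(2 * p + 1)}) i : (i \in supp f) = (0 < w f i)%N.
Proof. by rewrite inE /w absz_gt0. Qed.

Lemma l1_supp d p (f : {ffun 'I_d -> 'I_(2 * p + 1)}) :
  l1norm (Defs.decode f) = (\sum_(i in supp f) w f i)%N.
Proof. rewrite l1_w; apply: sum_supp => i; rewrite /w => ->; done. Qed.

Lemma E_l1 d p f : f \in E d p -> l1norm (Defs.decode f) = p.
Proof.
rewrite inE => /andP[/eqP hc /forallP hw].
rewrite l1_supp; transitivity (\sum_(i in supp f) 1)%N; last by rewrite sum1_card.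
apply: eq_bigr => i; rewrite w_supp => h.
have := hw i; lia.
Qed.

Lemma E_Q d p f : (0 < p)%N -> f \in E d p -> f \in Q d p.
Proof.
move=> p0 fE; have hl := E_l1 fE; move: fE; rewrite !inE hl leqnn /= => /andP[/eqP hc /forallP hw].
have : (0 < #|supp f|)%N by rewrite hc.
case/card_gt0P => i hi.
rewrite /primitive (bigD1 i) //=.
have -> : absz (Defs.decode f i) = 1%N by have := hw i; rewrite w_supp in hi; rewrite /w /Defs.decode in hi *; lia.
by rewrite gcd1n.
Qed.

Lemma Q_sub d p f : f \in Q d p -> (f \in E d p) || (#|supp f| < p)%N.
Proof.
rewrite !inE => /andP[hl _].
case: (ltnP #|supp f| p) => hs; first by rewrite orbT.
rewrite orbF.
have hsum : (\sum_(i in supp f) w f i = \sum_(i in supp f) 1 + \sum_(i in supp f) (w f i - 1))%N.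
  rewrite -big_split /=; apply: eq_bigr => i; rewrite w_supp; lia.
rewrite l1_supp hsum sum1_card in hl.
have hc : #|supp f| = p by lia.
rewrite hc eqxx /=.
have h0 : (\sum_(i in supp f) (w f i - 1) = 0)%N by lia.
apply/forallP => i.
case hi: (i \in supp f).
  have /eqP := h0; rewrite sum_nat_eq0 => /forall_inP /(_ i hi) /eqP; lia.
move: hi; rewrite w_supp; lia.
Qed.

Definition Rset p : {set 'I_(2 * p + 1)} := [set c : 'I_(2 * p + 1) | absz ((c : nat)%:Z - p%:Z)%R == 1%N].

Lemma card_Rset p : (0 < p)%N -> #|Rset p| = 2.
Proof.
move=> p0.
have ha : (p.-1 < 2 * p + 1)%N by lia.
have hb : (p.+1 < 2 * p + 1)%N by lia.
have -> : Rset p = [set Ordinal ha; Ordinal hb].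
  apply/setP => c; rewrite !inE.
  apply/idP/idP => [/eqP h | /orP[/eqP -> | /eqP ->]] /=; last 2 first.
  - apply/eqP; lia.
  - apply/eqP; lia.
  case: (ltnP c p) => hcp; apply/orP; [left | right]; apply/eqP/val_inj => /=; lia.
rewrite cards2; case: eqP => // /(congr1 val) /=; lia.
Qed.

Lemma Rset_w d p (f : {ffun 'I_d -> 'I_(2 * p + 1)}) i : (f i \in Rset p) = (w f i == 1%N).
Proof. by rewrite inE. Qed.

Lemma E_pffun d p (A : {set 'I_d}) f : #|A| = p ->
  ((f \in E d p) && (supp f == A)) = (f \in pffun_on (zc p) A (Rset p)).
Proof.
move=> hA.
have wz : forall i, (f i == zc p) = (w f i == 0%N).
  by move=> i; rewrite -decode0 /w absz_eq0.
apply/idP/idP.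
  rewrite inE => /andP[/andP[_ /forallP hw] /eqP hs].
  apply/(pfamilyP (F := fun _ => Rset p)); split.
    apply/fintype.subsetP => i; rewrite inE /= wz -hs w_supp; lia.
  move=> i hi; rewrite Rset_w; rewrite -hs w_supp in hi; have := hw i; lia.
case/(pfamilyP (F := fun _ => Rset p)) => /fintype.subsetP hsub hR.
have hs : supp f = A.
  apply/setP => i; rewrite w_supp; apply/idP/idP => h.
    apply: hsub; rewrite inE /= wz; lia.
  have := hR i h; rewrite Rset_w; lia.
rewrite hs eqxx andbT inE hs hA eqxx /=.
apply/forallP => i; case hi: (i \in A).
  have := hR i hi; rewrite Rset_w; lia.
have : i \notin supp f by rewrite hs hi.
rewrite w_supp; lia.
Qed.

Lemma card_E d p : (0 < p)%N -> #|E d p| = ('C(d, p) * 2 ^ p)%N.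
Proof.
move=> p0.
rewrite -sum1_card (partition_big (@supp d p) (fun A => #|A| == p)); last first.
  by move=> f; rewrite inE => /andP[].
rewrite /=.
transitivity (\sum_(A : {set 'I_d} | #|A| == p) 2 ^ p)%N.
  apply: eq_bigr => A /eqP hA.
  rewrite (eq_bigl (fun f => f \in pffun_on (zc p) A (Rset p))); last by move=> f; exact: E_pffun.
  by rewrite sum1_card card_pffun_on card_Rset // hA.
rewrite sum_nat_const.
have -> : #|[pred A : {set 'I_d} | #|A| == p]| = #|[set A : {set 'I_d} | #|A| == p]|.
  by apply: eq_card => A; rewrite inE.
by rewrite card_draws card_ord.
Qed.
Lemma ffact_le_exp d j : (d ^_ j <= d ^ j)%N.
Proof.
elim: j => [|j IH]; first by rewrite ffactn0 expn0.
rewrite ffactnSr expnSr; apply: leq_mul => //; exact: leq_subr.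
Qed.

Lemma bin_le_exp d j : ('C(d, j) <= d ^ j)%N.
Proof.
apply: leq_trans (ffact_le_exp d j); rewrite -bin_ffact; apply: leq_pmulr; exact: fact_gt0.
Qed.

Lemma bin_fact_le d p : ('C(d, p) * p`! <= d ^ p)%N.
Proof. rewrite bin_ffact; exact: ffact_le_exp. Qed.

Lemma exp_le_ffact d m : (d ^ m <= d ^_ m + m * m * d ^ m.-1)%N.
Proof.
elim: m => [|m IH]; first by rewrite ffactn0 expn0.
rewrite ffactnSr expnSr /=.
have hF := ffact_le_exp d m.
case: m IH hF => [|m] IH hF.
  rewrite ffactn0 expn0 /=; lia.
have hY : (d ^ m.+1 = d ^ m * d)%N by rewrite expnSr.
simpl in IH.
set X := (d ^ m.+1)%N in IH hF hY *. set Y := (d ^ m)%N in IH hY *. set F := (d ^_ m.+1)%N in IH hF *.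
nia.
Qed.

Lemma bin_small d p : (0 < d)%N -> (\sum_(j < p) 'C(d, j) <= p * d ^ p.-1)%N.
Proof.
move=> d0.
have -> : (p * d ^ p.-1 = \sum_(j < p) d ^ p.-1)%N by rewrite sum_nat_const card_ord.
apply: leq_sum => j _; apply: leq_trans (bin_le_exp d j) _.
rewrite leq_pexp2l //; have := ltn_ord j; lia.
Qed.

Lemma card_small_sets d k :
  (\sum_(A : {set 'I_d} | (#|A| < k)%N) 1 = \sum_(j < k) 'C(d, j))%N.
Proof.
elim: k => [|k IH]; first by rewrite big_ord0 big_pred0.
rewrite big_ord_recr /= -IH (bigID (fun A : {set 'I_d} => #|A| == k)) /= addnC.
congr (_ + _)%N.
  apply: eq_bigl => A; by rewrite ltnS ltn_neqAle andbC.
rewrite (eq_bigl (fun A : {set 'I_d} => A \in [set A : {set 'I_d} | #|A| == k])).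
  by rewrite sum1_card card_draws card_ord.
move=> A; rewrite inE; case: (#|A| =P k) => [->|]; by rewrite ?ltnSn ?andbF ?andbT.
Qed.

Lemma card_small d p : (0 < d)%N ->
  (#|[set f : {ffun 'I_d -> 'I_(2 * p + 1)} | (#|supp f| < p)%N]| <= p * d ^ p.-1 * (2 * p + 1) ^ p)%N.
Proof.
move=> d0.
rewrite -sum1_card (partition_big (@supp d p) (fun A => #|A| < p)%N); last by move=> f; rewrite inE.
apply: (@leq_trans (\sum_(A : {set 'I_d} | (#|A| < p)%N) (2 * p + 1) ^ p)).
  apply: leq_sum => A hA.
  rewrite sum1_card.
  apply: (@leq_trans #|pffun_on (zc p) A [set: 'I_(2 * p + 1)]|).
    apply: subset_leq_card; apply/fintype.subsetP => f; rewrite inE => /andP[_ /eqP hs].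
    apply/(pfamilyP (F := fun _ => [set: 'I_(2 * p + 1)])); split; last by move=> *; rewrite inE.
    apply/fintype.subsetP => i; rewrite inE /= -hs inE decode0; done.
  rewrite card_pffun_on cardsT card_ord leq_pexp2l; lia.
rewrite (eq_bigl (fun A : {set 'I_d} => A \in [set A : {set 'I_d} | (#|A| < p)%N])); last by move=> A; rewrite inE.
rewrite sum_nat_const leq_mul2r; apply/orP; right.
rewrite -sum1_card (eq_bigl (fun A : {set 'I_d} => (#|A| < p)%N)); last by move=> A; rewrite inE.
rewrite card_small_sets; exact: bin_small.
Qed.

Definition fperm d p (s : {perm 'I_d}) (f : {ffun 'I_d -> 'I_(2 * p + 1)}) : {ffun 'I_d -> 'I_(2 * p + 1)} :=
  [ffun k => f (s k)].

Lemma w_fperm d p s f i : w (@fperm d p s f) i = w f (s i).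
Proof. by rewrite /w /Defs.decode /fperm ffunE. Qed.

Lemma Q_perm d p (s : {perm 'I_d}) f : (fperm s f \in Q d p) = (f \in Q d p).
Proof.
rewrite /Q !inE /primitive !l1_w.
have -> : (\sum_i w (fperm s f) i = \sum_i w f i)%N.
  rewrite [RHS](reindex_inj (@perm_inj _ s)) /=; apply: eq_bigr => i _; exact: w_fperm.
have -> : (\big[gcdn/0%N]_(i < d) absz (Defs.decode (fperm s f) i) = \big[gcdn/0%N]_(i < d) absz (Defs.decode f i))%N.
  rewrite [RHS](reindex_inj (@perm_inj _ s)) /=; apply: eq_bigr => i _; exact: w_fperm.
done.
Qed.

Lemma sumQ_sym d p i j : (\sum_(f in Q d p) w f i = \sum_(f in Q d p) w f j)%N.
Proof.
have hK : involutive (@fperm d p (tperm i j)).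
  by move=> f; apply/ffunP => k; rewrite /fperm !ffunE tpermK.
rewrite (reindex_inj (can_inj hK)) /=; apply: eq_big => f; first by rewrite Q_perm.
by move=> _; rewrite w_fperm tpermL.
Qed.

Lemma K2 d p i : (2 * \sum_(f in BP d p) w f i = \sum_(f in Q d p) w f i)%N.
Proof.
rewrite (eq_bigl (fun f => (f \in Q d p) && first_nonzero_pos (Defs.decode f))); last by move=> f; rewrite BP_Q.
apply: half_sum; [exact: Q_neg | exact: Q_nz | by move=> f; rewrite w_neg].
Qed.

Lemma card2 d p : (2 * card_BP d p = #|Q d p|)%N.
Proof.
rewrite /card_BP -!sum1_card.
rewrite (eq_bigl (fun f => (f \in Q d p) && first_nonzero_pos (Defs.decode f))); last by move=> f; rewrite BP_Q.
by apply: half_sum; [exact: Q_neg | exact: Q_nz | ].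
Qed.

Lemma kappa2 d p : (0 < d)%N -> (2 * d * kappa_BP d p = \sum_(f in Q d p) l1norm (Defs.decode f))%N.
Proof.
move=> d0; pose i0 : 'I_d := Ordinal d0.
set K := fun i => (\sum_(f in BP d p) w f i)%N.
have hK : forall i, K i = K i0.
  move=> i; have := @K2 d p i; rewrite (@sumQ_sym d p i i0) -K2 /K; lia.
have -> : kappa_BP d p = K i0.
  apply/eqP; rewrite eqn_leq; apply/andP; split.
    by apply/bigmax_leqP => i _; rewrite -[X in (X <= _)%N]/(K i) hK.
  rewrite /kappa_BP; exact: (@leq_bigmax _ K i0).
rewrite -mulnA.
have -> : (d * K i0 = \sum_(i < d) K i)%N.
  by rewrite (eq_bigr (fun _ => K i0)) // big_const_ord iter_addn_0 mulnC.
rewrite /K exchange_big /=.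
rewrite (eq_bigr (fun f => l1norm (Defs.decode f))); last by move=> f _; rewrite l1_w.
rewrite (eq_bigl (fun f => (f \in Q d p) && first_nonzero_pos (Defs.decode f))); last by move=> f; rewrite BP_Q.
apply: half_sum; [exact: Q_neg | exact: Q_nz | by move=> f; rewrite !l1_w; apply: eq_bigr => i _; rewrite w_neg].
Qed.

Lemma Q_bounds d p : (0 < p)%N -> (0 < d)%N ->
  [/\ (#|E d p| <= #|Q d p|)%N,
      (#|Q d p| <= #|E d p| + p * d ^ p.-1 * (2 * p + 1) ^ p)%N,
      (p * #|E d p| <= \sum_(f in Q d p) l1norm (Defs.decode f))%N &
      (\sum_(f in Q d p) l1norm (Defs.decode f) <= p * #|Q d p|)%N].
Proof.
move=> p0 d0; split.
- apply: subset_leq_card; apply/fintype.subsetP => f; exact: E_Q.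
- apply: leq_trans (leq_add (leqnn _) (card_small p d0)).
  apply: leq_trans (leq_of_leqif (leq_card_setU _ _)).
  apply: subset_leq_card; apply/fintype.subsetP => f fQ.
  rewrite finset.in_setU [X in _ || X]inE; exact: Q_sub.
- rewrite (bigID (fun f => f \in E d p)) /=.
  apply: leq_trans (leq_addr _ _).
  rewrite (eq_bigl (fun f => f \in E d p)); last first.
    by move=> f; case fE: (f \in E d p); rewrite ?andbT ?andbF //; apply: E_Q.
  rewrite (eq_bigr (fun _ => p)); last by move=> f fE; rewrite E_l1.
  by rewrite sum_nat_const mulnC.
- rewrite (mulnC p #|Q d p|) -sum_nat_const; apply: leq_sum => f; rewrite inE => /andP[] //.
Qed.

Lemma nat_facts d p : (0 < p)%N -> (0 < d)%N ->
  let N := card_BP d p in let K := kappa_BP d p in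
  let B := 'C(d, p) in let P := (d ^ p.-1)%N in
  let M := (p * (2 * p + 1) ^ p)%N in
  (B * 2 ^ p.-1 <= N)%N /\
      (2 * N <= 2 * (B * 2 ^ p.-1) + M * P)%N /\
      (p * (B * 2 ^ p.-1) <= d * K)%N /\
      (2 * (d * K) <= 2 * (p * (B * 2 ^ p.-1)) + p * M * P)%N /\
      (B * p`! <= d * P)%N /\
      (d * P <= B * p`! + p * p * P)%N.
Proof.
move=> p0 d0 N K B P M.
have e2 : (2 ^ p = 2 * 2 ^ p.-1)%N by rewrite -expnS prednK.
have eP : (d ^ p = d * P)%N by rewrite /P -expnS prednK.
case: (Q_bounds p0 d0) => q1 q2 q3 q4.
have hN := card2 d p. have hK := kappa2 p d0.
rewrite card_E // e2 in q1 q2 q3.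
have f1 := bin_fact_le d p. have f2 := exp_le_ffact d p.
rewrite -bin_ffact eP in f2. rewrite eP in f1.
rewrite /N /K /B /M.
move: q1 q2 q3 q4 hN hK f1 f2.
set C := 'C(d, p). set T := (2 ^ p.-1)%N. set q := #|Q d p|. set s := (\sum_(f in Q d p) _)%N.
set NN := card_BP d p. set KK := kappa_BP d p. set X := ((2 * p + 1) ^ p)%N.
move=> q1 q2 q3 q4 hN hK f1 f2.
have hp1 : p = p.-1.+1 by rewrite prednK.
(repeat split); nia.
Qed.

Local Open Scope classical_set_scope.
Local Open Scope ring_scope.

Lemma cvg_rate (R : realType) (u : nat -> R) (a C : R) :
  (forall d, (0 < d)%N -> `|u d - a| <= C / d%:R) -> u @ \oo --> a.
Proof.
move=> H; apply/cvgrPdist_le => e e0.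
have C0 : 0 <= C by have := H 1%N isT; rewrite divr1; apply: le_trans.
have hb := archi_boundP (divr_ge0 C0 (ltW e0)).
set N := Num.Def.archi_bound _ in hb.
near=> d.
have hd : (N.+1 <= d)%N by near: d; exact: nbhs_infty_ge.
have d0 : (0 < d)%N by apply: leq_trans hd.
rewrite distrC; apply: (le_trans (H d d0)).
have dpos : 0 < d%:R :> R by rewrite ltr0n.
rewrite ler_pdivrMr // -ler_pdivrMl // mulrC.
apply: (le_trans (ltW hb)); rewrite ler_nat; exact: ltnW.
Unshelve. all: end_near.
Qed.
Lemma rate_step (R : realType) (x B D P F t u c r : R) :
  0 < D -> 0 < P -> 0 < F -> 0 <= t -> 0 <= u -> 0 <= c -> 0 <= r ->
  u * t * B <= x -> x <= u * t * B + c * P ->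
  B * F <= D * P -> D * P <= B * F + r * P ->
  `|x / (D * P) - u * t / F| <= (u * t * r / F + c) / D.
Proof.
move=> D0 P0 F0 t0 u0 c0 r0 h1 h2 h3 h4.
set a := u * t / F.
have a0 : 0 <= a by rewrite /a; apply: divr_ge0; [exact: mulr_ge0 | exact: ltW].
have hB : u * t * B = a * (B * F) by rewrite /a; field; exact: lt0r_neq0.
have DP0 : 0 < D * P by apply: mulr_gt0.
have e1 : a * (B * F) <= a * (D * P) by apply: ler_wpM2l.
have e2 : a * (D * P) <= a * (B * F) + a * r * P.
  by rewrite -mulrA -mulrDr; apply: ler_wpM2l.
have hx : x = (x / (D * P)) * (D * P) by rewrite divfK // gt_eqF.
set y := x / (D * P) in hx *.
have hc : (u * t * r / F + c) = a * r + c by rewrite /a; field; rewrite gt_eqF.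
rewrite hc.
have hyD : `|y - a| = `|(y - a) * D| / D.
  by rewrite normrM (gtr0_norm D0) mulfK // gt_eqF.
rewrite hyD ler_pM2r ?invr_gt0 // ler_norml; apply/andP; split.
- have h : (y - a) * D * P >= - (a * r) * P by rewrite hx in h1; nra.
  by rewrite -(ler_pM2r P0) mulNr; nra.
- have h : (y - a) * D * P <= c * P by rewrite hx in h2; nra.
  by rewrite -(ler_pM2r P0); nra.
Qed.
Unset Implicit Arguments.

Theorem lemma7p3 (R : realType) (p : nat) : (0 < p)%N ->
  ((fun d : nat => (card_BP d p)%:R / (d%:R ^+ p) : R) @ \oo
      --> (2 ^+ p.-1 / (p`!)%:R : R)) /\
  ((fun d : nat => (kappa_BP d p)%:R / (d%:R ^+ p.-1) : R) @ \oo
      --> (2 ^+ p.-1 / ((p.-1)`!)%:R : R)).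
Proof.
move=> p0.
set t : R := 2 ^+ p.-1.
set F : R := (p`!)%:R.
set M := (p * (2 * p + 1) ^ p)%N.
have F0 : 0 < F by rewrite ltr0n fact_gt0.
have t0 : 0 <= t by rewrite exprn_ge0.
have eDp : forall d : nat, (d%:R : R) ^+ p = d%:R * d%:R ^+ p.-1.
  by move=> d; rewrite -exprS prednK.
have reals : forall d, (0 < d)%N ->
  let D : R := d%:R in let P : R := d%:R ^+ p.-1 in let B : R := ('C(d, p))%:R in
  B * t <= (card_BP d p)%:R /\
      2 * (card_BP d p)%:R <= 2 * (B * t) + M%:R * P /\
      p%:R * (B * t) <= D * (kappa_BP d p)%:R /\
      2 * (D * (kappa_BP d p)%:R) <= 2 * (p%:R * (B * t)) + p%:R * M%:R * P /\
      B * F <= D * P /\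
      D * P <= B * F + p%:R * p%:R * P.
  move=> d d0 D P B.
  case: (nat_facts p0 d0) => n1 [n2 [n3 [n4 [n5 n6]]]].
  rewrite /D /P /B /t /F -!natrX -!natrM -!natrD !ler_nat; (repeat split) => //.
split.
- apply: (@cvg_rate R _ _ (1 * t * (p * p)%:R / F + M%:R / 2)) => d d0.
  case: (reals d d0) => r1 [r2 [_ [_ [r5 r6]]]].
  rewrite eDp.
  have -> : t / F = 1 * t / F by rewrite mul1r.
  have D0 : 0 < (d%:R : R) by rewrite ltr0n.
  have P0 : 0 < (d%:R : R) ^+ p.-1 by rewrite exprn_gt0.
  apply: (rate_step (B := ('C(d, p))%:R)) => //.
  + rewrite mul1r mulrC; exact: r1.
  + rewrite mul1r; nra.
  + by rewrite natrM.
- apply: (@cvg_rate R _ _ (p%:R * t * (p * p)%:R / F + (p * M)%:R / 2)) => d d0.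
  case: (reals d d0) => _ [_ [r3 [r4 [r5 r6]]]].
  have D0 : 0 < (d%:R : R) by rewrite ltr0n.
  have P0 : 0 < (d%:R : R) ^+ p.-1 by rewrite exprn_gt0.
  have -> : (kappa_BP d p)%:R / d%:R ^+ p.-1 = (d%:R * (kappa_BP d p)%:R) / (d%:R * d%:R ^+ p.-1) :> R.
    by rewrite invfM mulrACA divff ?mul1r // gt_eqF.
  have -> : t / ((p.-1)`!)%:R = p%:R * t / F.
    have ef : (p`! = p * (p.-1)`!)%N by case: (p) p0 => // n _; rewrite factS.
    rewrite /F ef natrM; field.
    by rewrite !pnatr_eq0 -!lt0n fact_gt0.
  apply: (rate_step (B := ('C(d, p))%:R) (u := p%:R) (r := (p * p)%:R) (c := (p * M)%:R / 2)) => //.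
  + nra.
  + rewrite natrM; nra.
  + by rewrite natrM.
Qed.
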